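(* Let $F$ be a finite field of odd characteristic in which $-1$ is not a square, let $z,z'\in F$ with $z\neq z'$, and let $g_z,g_{z'}:F^3\to\mathbb{C}$ be functions supported on the planes $\{x_3=z\}$ and $\{x_3=z'\}$ respectively, each $\sim1$ on its support, with $G_z=\{\underline{x}\in F^2:g_z(\underline{x},z)\ne0\}$ and $G_{z'}=\{\underline{x}\in F^2:g_{z'}(\underline{x},z')\ne0\}$. Then $$\big\|(g_z*K)\,(g_{z'}*K)\big\|_{L^2(F^3)}^2 \lesssim |F|^{-1}|G_z|\,|G_{z'}| + |F|^{-2}\,\mathcal{B}(G_z,G_{z'}),$$ where $\mathcal{B}(A,B):=\min\{\mathcal{T}(A,B),\ |F|\,(\mathcal{R}(A)\mathcal{R}(B))^{1/2}\}$.
   Context: $e:(F,+)\to\mathbb{C}^\times$ is a fixed nontrivial additive character; $x\cdot y=\sum_i x_iy_i$; points of $F^3$ are $x=(\underline{x},x_3)$. $P=\{(\underline{x},\underline{x}\cdot\underline{x}):\underline{x}\in F^2\}$. $F^3$ carries counting measure, $(h_1*h_2)(x)=\sum_y h_1(y)h_2(x-y)$. $(d\sigma)^{\vee}(x)=|F|^{-2}\sum_{\xi\in P}e(x\cdot\xi)$, $\delta$ the indicator of $0$, $K:=(d\sigma)^{\vee}-\delta$. ''$h\sim1$ on its support'' means $\tfrac12\le|h|\le2$ wherever $h\ne0$. For $x_0,x_1,x_2\in F^2$, $(x_0,x_1,x_2)$ is a corner if $(x_1-x_0)\cdot(x_2-x_1)=0$; $(x_0,x_1,x_2,x_3)\in(F^2)^4$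 is a rectangle if $(x_i,x_{i+1},x_{i+2})$ is a corner for each $i\in\{0,1,2,3\}$, indices mod 4; $\mathcal{R}(A)$ is the number of rectangles in $A^4$. A quadruple $(x_1,x_2,x_3,x_4)$ in $F^2$ is a trapezoid if $x_1-x_2=\lambda(x_3-x_4)$ for some $\lambda\in F$; $\mathcal{T}(A,B)$ is the number of trapezoids with $x_1,x_2\in A$, $x_3,x_4\in B$. $X\lesssim Y$ means $X\le CY$ with $C$ absolute. *)

(* Defs.v *)
From HB Require Import structures.
From mathcomp Require Import all_boot all_order all_algebra.
Set Implicit Arguments. Unset Strict Implicit. Unset Printing Implicit Defensive.
Import Order.TTheory GRing.Theory Num.Theory.
Local Open Scope ring_scope.

Section Defs.
Variables (F : finFieldType) (C : numClosedFieldType).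

(* F^2 is F * F ; F^3 is (F * F) * F, x = (x.1, x.2) = (underline x, x_3). *)
Definition dot2 (a b : F * F) : F := a.1 * b.1 + a.2 * b.2.
Definition dot3 (x y : F * F * F) : F := dot2 x.1 y.1 + x.2 * y.2.
Definition sub2 (a b : F * F) : F * F := (a.1 - b.1, a.2 - b.2).
Definition sub3 (x y : F * F * F) : F * F * F := (sub2 x.1 y.1, x.2 - y.2).
Definition zero3 : F * F * F := ((0, 0), 0).

Definition nontrivial_additive_character (e : F -> C) : Prop :=
  (forall x y, e (x + y) = e x * e y) /\ (forall x, e x != 0) /\
  (exists x, e x != 1).

Definition conv3 (h1 h2 : F * F * F -> C) (x : F * F * F) : C :=
  \sum_(y : F * F * F) h1 y * h2 (sub3 x y).

(* (d sigma)^vee (x) = |F|^{-2} sum_{xi in P} e(x . xi),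
   P = {(xi, xi . xi) : xi in F^2} *)
Definition dsigma_check (e : F -> C) (x : F * F * F) : C :=
  (#|F|%:R ^+ 2)^-1 * \sum_(xi : F * F) e (dot3 x (xi, dot2 xi xi)).

Definition delta3 (x : F * F * F) : C := if x == zero3 then 1 else 0.

Definition Kker (e : F -> C) (x : F * F * F) : C := dsigma_check e x - delta3 x.

Definition L2sq (h : F * F * F -> C) : C := \sum_(x : F * F * F) `|h x| ^+ 2.

Definition sim1_on_support (h : F * F * F -> C) : Prop :=
  forall x, h x != 0 -> 2^-1 <= `|h x| <= 2.

Definition supported_on_plane (h : F * F * F -> C) (z : F) : Prop :=
  forall x, x.2 != z -> h x = 0.

Definition slice_support (h : F * F * F -> C) (z : F) : {set F * F} :=
  [set u : F * F | h (u, z) != 0].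

Definition corner (x0 x1 x2 : F * F) : bool :=
  dot2 (sub2 x1 x0) (sub2 x2 x1) == 0.

Definition rectangle (x0 x1 x2 x3 : F * F) : bool :=
  [&& corner x0 x1 x2, corner x1 x2 x3, corner x2 x3 x0 & corner x3 x0 x1].

Definition Rcount (A : {set F * F}) : nat :=
  #|[set t : (F * F) * (F * F) * (F * F) * (F * F) |
      [&& t.1.1.1 \in A, t.1.1.2 \in A, t.1.2 \in A, t.2 \in A &
          rectangle t.1.1.1 t.1.1.2 t.1.2 t.2]]|.

Definition trapezoid (x1 x2 x3 x4 : F * F) : bool :=
  [exists l : F, sub2 x1 x2 == (l * (sub2 x3 x4).1, l * (sub2 x3 x4).2)].

Definition Tcount (A B : {set F * F}) : nat :=
  #|[set t : (F * F) * (F * F) * (F * F) * (F * F) |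
      [&& t.1.1.1 \in A, t.1.1.2 \in A, t.1.2 \in B, t.2 \in B &
          trapezoid t.1.1.1 t.1.1.2 t.1.2 t.2]]|.

Definition Bq (A B : {set F * F}) : C :=
  Num.min (Tcount A B)%:R (#|F|%:R * sqrtC ((Rcount A * Rcount B)%:R)).

End Defs.

(* Main.v *)
Require Import Defs.
From HB Require Import structures.
From mathcomp Require Import all_boot all_order all_algebra all_field.
From mathcomp Require Import ring lra.
Set Implicit Arguments. Unset Strict Implicit. Unset Printing Implicit Defensive.
Import Order.TTheory GRing.Theory Num.Theory.
Local Open Scope ring_scope.

Section Main.
Variables (F : finFieldType) (C : numClosedFieldType) (e : F -> C).
Hypothesis eD : forall x y, e (x + y) = e x * e y.
Hypothesis e_nz : forall x, e x != 0.
Hypothesis e_nt : exists x, e x != 1.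
Hypothesis two_nz : (2 : F) != 0.

Local Notation q := (#|F|%:R : C).

Lemma e0 : e 0 = 1.
Proof.
have := eD 0 0; rewrite addr0 => h.
have /eqP : e 0 * (e 0 - 1) = 0 by rewrite mulrBr mulr1 -h subrr.
by rewrite mulf_eq0 (negPf (e_nz 0)) /= subr_eq0 => /eqP.
Qed.

Lemma eN x : e (- x) = (e x)^-1.
Proof.
apply: (mulIf (e_nz x)); rewrite -eD addNr e0 mulVf //.
Qed.

Lemma eMn x n : e (x *+ n) = e x ^+ n.
Proof. by elim: n => [|n IH]; rewrite ?mulr0n ?e0 // mulrS eD IH exprS. Qed.

Lemma e_norm x : `|e x| = 1.
Proof.
case: (finPcharP F) => p pp pc.
have h : e x ^+ p = 1 by rewrite -eMn (mulrn_pchar pc) e0.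
have : `|e x| ^+ p == 1 by rewrite -normrX h normr1.
by rewrite pexpr_eq1 ?prime_gt0 // => /eqP.
Qed.

Lemma e_conj x : (e x)^* = e (- x).
Proof.
rewrite eN; apply: (mulfI (e_nz x)); rewrite mulfV // -normCK e_norm expr1n //.
Qed.

Lemma q_neq0 : q != 0.
Proof. by rewrite pnatr_eq0 -lt0n; apply/card_gt0P; exists 0. Qed.

Lemma q_gt0 : 0 < q.
Proof. by rewrite ltr0n; apply/card_gt0P; exists 0. Qed.

Lemma orth1 (k : F) : \sum_(b : F) e (k * b) = if k == 0 then q else 0.
Proof.
case: eqP => [->|/eqP kn].
  by under eq_bigr do rewrite mul0r e0; rewrite sumr_const.
rewrite (reindex_inj (mulfI (invr_neq0 kn))) /=.
have -> : \sum_(j : F) e (k * (k^-1 * j)) = \sum_(j : F) e j.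
  by apply: eq_bigr => j _; rewrite mulrA (mulfV kn) mul1r.
case: e_nt => x0 hx0.
have h : \sum_(j : F) e j = e x0 * \sum_(j : F) e j.
  rewrite {1}(reindex_inj (addrI x0)) /= mulr_sumr; apply: eq_bigr => j _; by rewrite eD.
have : (1 - e x0) * \sum_(j : F) e j = 0 by rewrite mulrBl mul1r -h subrr.
move/eqP; rewrite mulf_eq0 subr_eq0 eq_sym (negPf hx0) /=; exact/eqP.
Qed.

Lemma sum_pair (T U : finType) (f : T * U -> C) :
  \sum_(p : T * U) f p = \sum_(a : T) \sum_(b : U) f (a, b).
Proof. by rewrite pair_big; apply: eq_bigr => -[a b]. Qed.

Lemma sumprod (T U : finType) (f : T -> C) (g : U -> C) :
  \sum_(p : T * U) f p.1 * g p.2 = (\sum_a f a) * (\sum_b g b).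
Proof. by rewrite sum_pair big_distrlr. Qed.

Lemma orth1' (k : F) : \sum_(b : F) e (b * k) = if k == 0 then q else 0.
Proof. by rewrite -orth1; apply: eq_bigr => b _; rewrite mulrC. Qed.

Lemma orth2 (w : F * F) :
  \sum_(x : F * F) e (dot2 x w) = if w == (0, 0) then q ^+ 2 else 0.
Proof.
rewrite (eq_bigr (fun x => e (x.1 * w.1) * e (x.2 * w.2))); last first.
  by move=> x _; rewrite /dot2 eD.
rewrite (sumprod (fun a => e (a * w.1)) (fun b => e (b * w.2))) !orth1'; case: w => a b /=.
rewrite xpair_eqE; case: (a == 0); case: (b == 0); rewrite ?mul0r ?mulr0 ?expr2 //.
Qed.

Lemma sum_if0 (T : finType) (P : pred T) (f : T -> C) :
  \sum_(x : T) (if P x then f x else 0) = \sum_(x | P x) f x.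
Proof. by rewrite [RHS]big_mkcond. Qed.

Lemma four_nz : (4 : F) != 0.
Proof. have -> : (4 : F) = 2 * 2 by ring. by rewrite mulf_neq0. Qed.

Definition gam (s c : F) : C := \sum_(a : F) e (c * a + s * (a * a)).
Definition rr (s : F) : F := - (2 * 2 * s)^-1.

Lemma gam_shift s c : s != 0 -> gam s c = e (rr s * (c * c)) * gam s 0.
Proof.
move=> sn; rewrite /gam mulr_sumr.
have inj : injective (fun a : F => a - c / (2 * s)) by move=> x y; apply: addIr.
rewrite (reindex_inj inj) /=; apply: eq_bigr => a _; rewrite -eD; congr e.
rewrite /rr; field.
by rewrite sn four_nz two_nz.
Qed.

Lemma gam_norm s : s != 0 -> gam s 0 * (gam s 0)^* = q.
Proof.
move=> sn; rewrite /gam rmorph_sum big_distrlr /=.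
under eq_bigr do under eq_bigr do rewrite e_conj -eD.
rewrite exchange_big /=.
rewrite (eq_bigr (fun b => \sum_a e ((0 * a + s * (a * a)) + b * (2 * s * a)))); last first.
  move=> b _; rewrite (reindex_inj (addIr b)) /=; apply: eq_bigr => a _; congr e; ring.
under eq_bigr do under eq_bigr do rewrite eD.
rewrite exchange_big /=.
under eq_bigr do rewrite -mulr_sumr orth1'.
rewrite (bigD1 0) //= big1 => [|a an]; last by rewrite !mulf_eq0 (negPf an) (negPf sn) (negPf two_nz) mulr0.
by rewrite !mulr0 eqxx !addr0 e0 mul1r.
Qed.

Lemma dot2C (a b : F * F) : dot2 a b = dot2 b a.
Proof. by rewrite /dot2 mulrC [a.2 * _]mulrC. Qed.

Lemma K_s0 w : Kker e (w, 0) = 0.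
Proof.
rewrite /Kker /dsigma_check /delta3 /zero3.
rewrite (eq_bigr (fun xi => e (dot2 xi w))); last first.
  by move=> xi _; rewrite /dot3 /= mul0r addr0 dot2C.
rewrite orth2 xpair_eqE eqxx andbT.
case: (w == (0, 0)); last by rewrite mulr0 subrr.
by rewrite mulVf ?subrr // expf_neq0 // q_neq0.
Qed.

Lemma K_s s w : s != 0 ->
  Kker e (w, s) = (q ^+ 2)^-1 * (e (rr s * dot2 w w) * (gam s 0 * gam s 0)).
Proof.
move=> sn; rewrite /Kker /dsigma_check /delta3 /zero3 xpair_eqE /= (negPf sn) andbF subr0.
congr (_ * _).
rewrite (eq_bigr (fun xi => e (w.1 * xi.1 + s * (xi.1 * xi.1)) * e (w.2 * xi.2 + s * (xi.2 * xi.2)))); last first.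
  move=> xi _; rewrite -eD /dot3 /dot2 /=; congr e; ring.
rewrite sum_pair /= -big_distrlr /=.
change (gam s w.1 * gam s w.2 = e (rr s * dot2 w w) * (gam s 0 * gam s 0)).
rewrite (gam_shift w.1 sn) (gam_shift w.2 sn) /dot2 mulrDr eD.
by rewrite -!mulrA; congr (_ * _); rewrite mulrCA.
Qed.

Lemma conv_plane (g : F * F * F -> C) z xu t : supported_on_plane g z ->
  conv3 g (Kker e) (xu, t) = \sum_(u : F * F) g (u, z) * Kker e (sub2 xu u, t - z).
Proof.
move=> hg; rewrite /conv3 sum_pair; apply: eq_bigr => u _.
rewrite (bigD1 z) //= big1 ?addr0 // => s sz; by rewrite hg ?mul0r.
Qed.

Lemma conv_z (g : F * F * F -> C) z xu : supported_on_plane g z ->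
  conv3 g (Kker e) (xu, z) = 0.
Proof.
move=> hg; rewrite (conv_plane _ _ hg) big1 // => u _; by rewrite subrr K_s0 mulr0.
Qed.

Definition scale2 (c : F) (v : F * F) : F * F := (c * v.1, c * v.2).

Definition Bf (h : F * F -> C) (r : F) (y : F * F) : C :=
  \sum_(u : F * F) h u * e (r * dot2 u u + dot2 y u).

Lemma resh1 (A B D Q G2 : C) : A * (Q * (B * D * G2)) = Q * G2 * B * (A * D).
Proof. ring. Qed.

Lemma conv_norm (g : F * F * F -> C) z xu t : supported_on_plane g z -> t != z ->
  `|conv3 g (Kker e) (xu, t)| =
  q^-1 * `|Bf (fun u => g (u, z)) (rr (t - z)) (scale2 (- (2 * rr (t - z))) xu)|.
Proof.
move=> hg tz; have sn : t - z != 0 by rewrite subr_eq0.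
rewrite (conv_plane _ _ hg).
set r := rr (t - z); set Ga := gam (t - z) 0.
have -> : \sum_(u : F * F) g (u, z) * Kker e (sub2 xu u, t - z) =
  ((q ^+ 2)^-1 * (Ga * Ga) * e (r * dot2 xu xu)) *
  Bf (fun u => g (u, z)) r (scale2 (- (2 * r)) xu).
  rewrite /Bf mulr_sumr; apply: eq_bigr => u _; rewrite (K_s _ sn) -/r -/Ga.
  have -> : e (r * dot2 (sub2 xu u) (sub2 xu u)) =
     e (r * dot2 xu xu) * e (r * dot2 u u + dot2 (scale2 (- (2 * r)) xu) u).
    by rewrite -eD; congr e; rewrite /dot2 /sub2 /scale2 /=; ring.
  by rewrite resh1.
rewrite !normrM e_norm mulr1 normfV normrX ger0_norm ?ler0n //.
have -> : `|Ga| * `|Ga| = q by rewrite -expr2 normCK gam_norm.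
congr (_ * _); by rewrite expr2 invfM -mulrA mulVf ?mulr1 // q_neq0.
Qed.

Definition T4 := ((F * F) * (F * F) * (F * F) * (F * F))%type.
Definition add2 (a b : F * F) : F * F := (a.1 + b.1, a.2 + b.2).

Lemma prod4 (f1 f2 f3 f4 : F * F -> C) :
  (\sum_a f1 a) * (\sum_b f2 b) * (\sum_c f3 c) * (\sum_d f4 d) =
  \sum_(t : T4) f1 t.1.1.1 * f2 t.1.1.2 * f3 t.1.2 * f4 t.2.
Proof.
rewrite -(sumprod f1 f2) -(sumprod (fun p => f1 p.1 * f2 p.2) f3).
by rewrite -(sumprod (fun p => f1 p.1.1 * f2 p.1.2 * f3 p.2) f4).
Qed.

Definition QS (h1 h2 : F * F -> C) (r1 r2 c1 c2 : F) : C :=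
  \sum_(t : T4) h1 t.1.1.1 * (h1 t.1.1.2)^* * h2 t.1.2 * (h2 t.2)^* *
   e (r1 * (dot2 t.1.1.1 t.1.1.1 - dot2 t.1.1.2 t.1.1.2) +
      r2 * (dot2 t.1.2 t.1.2 - dot2 t.2 t.2)) *
   (if add2 (scale2 c1 (sub2 t.1.1.1 t.1.1.2)) (scale2 c2 (sub2 t.1.2 t.2)) == (0, 0)
    then q ^+ 2 else 0).

Lemma Bf_conj h r y :
  (Bf h r y)^* = \sum_(u : F * F) (h u)^* * e (- (r * dot2 u u + dot2 y u)).
Proof. by rewrite /Bf rmorph_sum; apply: eq_bigr => u _; rewrite rmorphM /= e_conj. Qed.

Lemma resh2 (a b c d ea eb ec ed E : C) : ea * eb * ec * ed = E ->
  a * ea * (b * eb) * (c * ec) * (d * ed) = a * b * c * d * E.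
Proof. move=> <-; ring. Qed.

Lemma quad h1 h2 r1 r2 c1 c2 :
  \sum_(x : F * F) `|Bf h1 r1 (scale2 c1 x)| ^+ 2 * `|Bf h2 r2 (scale2 c2 x)| ^+ 2 =
  QS h1 h2 r1 r2 c1 c2.
Proof.
under eq_bigr do rewrite !normCK !Bf_conj mulrA /Bf prod4.
rewrite exchange_big /=; apply: eq_bigr => t _.
set W := add2 _ _.
rewrite -orth2 mulr_sumr; apply: eq_bigr => x _.
rewrite -[RHS]mulrA; apply: resh2; rewrite -!eD; congr e.
rewrite /W /dot2 /add2 /scale2 /sub2 /=; ring.
Qed.

Definition inAB (A B : {set F * F}) (t : T4) : bool :=
  [&& t.1.1.1 \in A, t.1.1.2 \in A, t.1.2 \in B & t.2 \in B].

Definition cc (s : F) : F := - (2 * rr s).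

Definition Wt (z z' t : F) (tau : T4) : F * F :=
  add2 (scale2 (cc (t - z)) (sub2 tau.1.1.1 tau.1.1.2))
       (scale2 (cc (t - z')) (sub2 tau.1.2 tau.2)).

Lemma cc_lin s s' d f : s != 0 -> s' != 0 ->
  (cc s * d + cc s' * f == 0) = (s' * d + s * f == 0).
Proof.
move=> sn sn'.
have -> : cc s * d + cc s' * f = (s' * d + s * f) * (2 * s * s')^-1.
  rewrite /cc /rr; field; by rewrite sn sn' two_nz four_nz.
have hn : (2 * s * s')^-1 != 0 by rewrite invr_eq0 !mulf_neq0.
apply/eqP/eqP => [h|->]; last by rewrite mul0r.
by move: h => /eqP; rewrite mulf_eq0 (negPf hn) orbF => /eqP.
Qed.

Lemma uniq1 (z z' t1 t2 d f : F) : z != z' ->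
  (t1 - z') * d + (t1 - z) * f = 0 -> (t2 - z') * d + (t2 - z) * f = 0 ->
  t1 != t2 -> d = 0.
Proof.
move=> zz h1 h2 t12.
have : (t1 - t2) * (d + f) = 0.
  have -> : (t1 - t2) * (d + f) = ((t1 - z') * d + (t1 - z) * f) - ((t2 - z') * d + (t2 - z) * f) by ring.
  by rewrite h1 h2 subrr.
move/eqP; rewrite mulf_eq0 subr_eq0 (negPf t12) /= => /eqP hdf.
have hf : f = - d by apply/eqP; rewrite -subr_eq0 opprK addrC hdf.
have : (z - z') * d = 0.
  have -> : (z - z') * d = (t1 - z') * d + (t1 - z) * (- d) by ring.
  by rewrite -hf.
by move/eqP; rewrite mulf_eq0 subr_eq0 (negPf zz) /= => /eqP.
Qed.

Lemma Wt_eq0 z z' t tau : t != z -> t != z' ->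
  (Wt z z' t tau == (0, 0)) =
  ((t - z') * (sub2 tau.1.1.1 tau.1.1.2).1 + (t - z) * (sub2 tau.1.2 tau.2).1 == 0) &&
  ((t - z') * (sub2 tau.1.1.1 tau.1.1.2).2 + (t - z) * (sub2 tau.1.2 tau.2).2 == 0).
Proof.
move=> tz tz'; have sn : t - z != 0 by rewrite subr_eq0.
have sn' : t - z' != 0 by rewrite subr_eq0.
by rewrite /Wt /add2 /scale2 xpair_eqE /= !cc_lin.
Qed.

Lemma sum_bool (T : finType) (P : pred T) :
  (\sum_(t : T) (P t : nat))%N = #|[set t | P t]|.
Proof.
rewrite -sum1dep_card [RHS]big_mkcond /=; apply: eq_bigr => t _; by case: (P t).
Qed.

Lemma pair_eqE (p : F * F) a b : (p == (a, b)) = (p.1 == a) && (p.2 == b).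
Proof. by case: p. Qed.

Lemma pair_eq0 (p : F * F) : (p == (0, 0)) = (p.1 == 0) && (p.2 == 0).
Proof. by case: p. Qed.

Lemma count_tau z z' A B (tau : T4) : z != z' ->
  (\sum_(t : F) [&& t != z, t != z', inAB A B tau & Wt z z' t tau == (0%R, 0%R)]
  <= [&& inAB A B tau, sub2 tau.1.1.1 tau.1.1.2 == (0%R, 0%R) & sub2 tau.1.2 tau.2 == (0%R, 0%R)] * #|F|
     + [&& inAB A B tau & trapezoid tau.1.1.1 tau.1.1.2 tau.1.2 tau.2])%N.
Proof.
move=> zz.
case hin: (inAB A B tau); last by rewrite big1 // => t _; rewrite !andbF.
rewrite /=.
set d := sub2 _ _; set f := sub2 _ _.
case hdf: ((d == (0%R, 0%R)) && (f == (0%R, 0%R))).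
  rewrite mul1n; apply: leq_trans (leq_addr _ _).
  apply: leq_trans (_ : (\sum_(t : F) 1 <= _)%N).
    by apply: leq_sum => t _; case: (_ && _).
  by rewrite sum1_card.
rewrite mul0n add0n.
rewrite (sum_bool (fun t => [&& t != z, t != z' & Wt z z' t tau == (0%R, 0%R)])).
case: (set_0Vmem [set t | [&& t != z, t != z' & Wt z z' t tau == (0%R, 0%R)]]) => [->|[t0]].
  by rewrite cards0.
rewrite inE => /and3P [t0z t0z' W0].
have sn : t0 - z != 0 by rewrite subr_eq0.
have sn' : t0 - z' != 0 by rewrite subr_eq0.
move: (W0); rewrite Wt_eq0 // -/d -/f => /andP [h1 h2].
have key (a b : F) : (t0 - z') * a + (t0 - z) * b == 0 -> a = (- (t0 - z) / (t0 - z')) * b.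
  move/eqP => h; apply: (mulfI sn').
  have -> : (t0 - z') * a = - ((t0 - z) * b) by apply/eqP; rewrite -subr_eq0 opprK h.
  field; exact: sn'.
have -> : trapezoid tau.1.1.1 tau.1.1.2 tau.1.2 tau.2.
  apply/existsP; exists (- (t0 - z) / (t0 - z')).
  by rewrite -/d -/f pair_eqE {1}(key _ _ h1) {1} (key _ _ h2) !eqxx.
apply: leq_trans (subset_leq_card (_ : _ \subset [set t0])) _; last by rewrite cards1.
apply/subsetP => t1; rewrite !inE => /and3P [t1z t1z' W1].
case: (eqVneq t1 t0) => // t10.
move: W1; rewrite Wt_eq0 // -/d -/f => /andP [g1 g2].
have d1 := uniq1 zz (eqP g1) (eqP h1) t10.
have d2 := uniq1 zz (eqP g2) (eqP h2) t10.
have f1 : f.1 = 0.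
  by move: h1; rewrite d1 mulr0 add0r mulf_eq0 (negPf sn) => /eqP.
have f2 : f.2 = 0.
  by move: h2; rewrite d2 mulr0 add0r mulf_eq0 (negPf sn) => /eqP.
move: hdf; rewrite (pair_eq0 d) (pair_eq0 f) d1 d2 f1 f2 eqxx //.
Qed.

Lemma sub2_eq0 (a b : F * F) : (sub2 a b == (0, 0)) = (a == b).
Proof.
case: a b => [a1 a2] [b1 b2]; rewrite /sub2 /= !xpair_eqE !subr_eq0 //.
Qed.

Lemma count_T z z' A B : z != z' ->
 (\sum_(t : F) \sum_(tau : T4) [&& t != z, t != z', inAB A B tau & Wt z z' t tau == (0%R, 0%R)]
  <= #|F| * (#|A| * #|B|) + Tcount A B)%N.
Proof.
move=> zz; rewrite exchange_big /=.
apply: (@leq_trans (\sum_(tau : T4) ([&& inAB A B tau, sub2 tau.1.1.1 tau.1.1.2 == (0%R, 0%R) & sub2 tau.1.2 tau.2 == (0%R, 0%R)] * #|F|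
     + [&& inAB A B tau & trapezoid tau.1.1.1 tau.1.1.2 tau.1.2 tau.2]))).
  by apply: leq_sum => tau _; exact: count_tau.
rewrite big_split /=; apply: leq_add.
  rewrite -big_distrl /= mulnC leq_mul2l; apply/orP; right.
  rewrite (sum_bool (fun tau => [&& inAB A B tau, sub2 tau.1.1.1 tau.1.1.2 == (0%R, 0%R)
      & sub2 tau.1.2 tau.2 == (0%R, 0%R)])).
  rewrite -cardsX.
  apply: leq_trans (leq_imset_card (fun p : (F * F) * (F * F) => (p.1, p.1, p.2, p.2)) _).
  apply: subset_leq_card; apply/subsetP => tau; rewrite inE => /and3P [hin h12 h34].
  move: hin; rewrite /inAB => /and4P [i1 i2 i3 i4].
  apply/imsetP; exists (tau.1.1.1, tau.1.2); first by rewrite inE i1 i3.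
  move: h12 h34; rewrite !sub2_eq0 => /eqP h12 /eqP h34.
  by move: h12 h34; clear; case: tau => [[[t1 t2] t3] t4] /= <- <-.
rewrite (sum_bool (fun tau => [&& inAB A B tau & trapezoid tau.1.1.1 tau.1.1.2 tau.1.2 tau.2])).
apply: eq_leq; rewrite /Tcount; apply: eq_card => tau; rewrite !inE /inAB -!andbA //.
Qed.

Lemma term_bound (h1 h2 : F * F -> C) (A B : {set F * F}) (tau : T4) (X : C) (P : F) :
  (forall u, `|h1 u| <= 2) -> (forall u, u \notin A -> h1 u = 0) ->
  (forall u, `|h2 u| <= 2) -> (forall u, u \notin B -> h2 u = 0) ->
  `|h1 tau.1.1.1 * (h1 tau.1.1.2)^* * h2 tau.1.2 * (h2 tau.2)^* * e P * X|
    <= 16 * (inAB A B tau)%:R * `|X|.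
Proof.
move=> b1 z1 b2 z2.
case hin: (inAB A B tau); last first.
  have H0 : h1 tau.1.1.1 * (h1 tau.1.1.2)^* * h2 tau.1.2 * (h2 tau.2)^* = 0.
    have [i1|i1] := boolP (tau.1.1.1 \in A); last by rewrite (z1 _ i1) !mul0r.
    have [i2|i2] := boolP (tau.1.1.2 \in A); last by rewrite (z1 _ i2) conjC0 mulr0 !mul0r.
    have [i3|i3] := boolP (tau.1.2 \in B); last by rewrite (z2 _ i3) mulr0 mul0r.
    have [i4|i4] := boolP (tau.2 \in B); last by rewrite (z2 _ i4) conjC0 mulr0.
    by move: hin; rewrite /inAB i1 i2 i3 i4.
  by rewrite H0 !mul0r normr0 mulr0 mul0r.
rewrite mulr1 !normrM !norm_conjC e_norm mulr1.
apply: ler_wpM2r; first exact: normr_ge0.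
have -> : (16 : C) = 2 * 2 * 2 * 2 by rewrite -!natrM.
by rewrite !ler_pM ?normr_ge0 ?mulr_ge0 ?ler0n.
Qed.

Lemma QS_bound (h1 h2 : F * F -> C) (A B : {set F * F}) r1 r2 c1 c2 :
  (forall u, `|h1 u| <= 2) -> (forall u, u \notin A -> h1 u = 0) ->
  (forall u, `|h2 u| <= 2) -> (forall u, u \notin B -> h2 u = 0) ->
  `|QS h1 h2 r1 r2 c1 c2| <= 16 * q ^+ 2 *
    (\sum_(tau : T4) [&& inAB A B tau &
       add2 (scale2 c1 (sub2 tau.1.1.1 tau.1.1.2)) (scale2 c2 (sub2 tau.1.2 tau.2)) == (0%R, 0%R)] : nat)%:R.
Proof.
move=> b1 z1 b2 z2.
rewrite /QS natr_sum mulr_sumr; apply: le_trans (ler_norm_sum _ _ _) _.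
apply: ler_sum => tau _; apply: le_trans (@term_bound h1 h2 A B tau _ _ b1 z1 b2 z2) _.
case: (_ == _); rewrite ?andbT ?andbF ?normr0 ?mulr0 //.
rewrite normrX ger0_norm ?ler0n // [X in _ <= X]mulrAC.
by case: (inAB A B tau).
Qed.

Lemma h_bound (g : F * F * F -> C) w : sim1_on_support g -> `|g w| <= 2.
Proof.
move=> hs; have [->|nz] := eqVneq (g w) 0; first by rewrite normr0 ler0n.
by case/andP: (hs w nz).
Qed.

Lemma h_zero (g : F * F * F -> C) z u : u \notin slice_support g z -> g (u, z) = 0.
Proof. by rewrite inE negbK => /eqP. Qed.

Lemma sq_conv (g : F * F * F -> C) z xu t : supported_on_plane g z -> t != z ->
  `|conv3 g (Kker e) (xu, t)| ^+ 2 =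
  (q ^+ 2)^-1 * `|Bf (fun u => g (u, z)) (rr (t - z)) (scale2 (cc (t - z)) xu)| ^+ 2.
Proof. by move=> hg tz; rewrite (conv_norm _ hg tz) exprMn exprVn. Qed.

Lemma sumr_ge0' (T : finType) (f : T -> C) : (forall x, 0 <= f x) -> 0 <= \sum_x f x.
Proof. by move=> h; apply: sumr_ge0 => x _; exact: h. Qed.


Lemma rect_of (u1 u2 u3 u4 : F * F) :
  add2 (scale2 1 (sub2 u1 u2)) (scale2 1 (sub2 u3 u4)) == (0, 0) ->
  (dot2 u1 u1 - dot2 u2 u2) + (dot2 u3 u3 - dot2 u4 u4) == 0 ->
  rectangle u1 u2 u3 u4.
Proof.
case: u1 u2 u3 u4 => [a1 a2] [b1 b2] [c1 c2] [d1 d2].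
rewrite /add2 /scale2 /sub2 /dot2 /= xpair_eqE => /andP [/eqP h1 /eqP h2] /eqP hQ.
have e1 : d1 = a1 - b1 + c1.
  apply/eqP; rewrite -subr_eq0; apply/eqP.
  have -> : d1 - (a1 - b1 + c1) = - (1 * (a1 - b1) + 1 * (c1 - d1)) by ring.
  by rewrite h1 oppr0.
have e2 : d2 = a2 - b2 + c2.
  apply/eqP; rewrite -subr_eq0; apply/eqP.
  have -> : d2 - (a2 - b2 + c2) = - (1 * (a2 - b2) + 1 * (c2 - d2)) by ring.
  by rewrite h2 oppr0.
subst d1 d2.
set Q := (X in X = 0) in hQ.
have key (X : F) : X * 2 = Q -> X == 0.
  by move=> hX; move: hQ; rewrite -hX => /eqP; rewrite mulf_eq0 (negPf two_nz) orbF.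
have key' (X : F) : X * 2 = - Q -> X == 0.
  by move=> hX; move: hQ; move/eqP; rewrite -oppr_eq0 -hX mulf_eq0 (negPf two_nz) orbF.
rewrite /rectangle /corner /dot2 /sub2 /=.
by apply/and4P; split; [apply: key | apply: key' | apply: key | apply: key']; rewrite /Q; ring.
Qed.

Lemma QS_c h r c : c != 0 -> QS h h r r c c = QS h h r r 1 1.
Proof.
move=> cn; rewrite /QS; apply: eq_bigr => tau _.
have -> : forall d f : F * F, (add2 (scale2 c d) (scale2 c f) == (0, 0)) =
    (add2 (scale2 1 d) (scale2 1 f) == (0, 0)).
  by move=> d f; rewrite /add2 /scale2 !xpair_eqE /= -!mulrDr !mul1r !mulf_eq0 (negPf cn).
by [].
Qed.

Lemma S0_ge0 h : 0 <= QS h h 0 0 1 1.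
Proof. by rewrite -quad; apply: sumr_ge0' => x; rewrite mulr_ge0 ?exprn_ge0 ?normr_ge0. Qed.

Lemma rr_neq0 s : s != 0 -> rr s != 0.
Proof. by move=> sn; rewrite /rr oppr_eq0 invr_eq0 !mulf_neq0. Qed.

Lemma cc_neq0 s : s != 0 -> cc s != 0.
Proof. by move=> sn; rewrite /cc oppr_eq0 mulf_neq0 // rr_neq0. Qed.

Lemma rr_inj s1 s2 : rr s1 = rr s2 -> s1 = s2.
Proof.
rewrite /rr => /oppr_inj /invr_inj h.
have h4 : (2 * 2 : F) != 0 by rewrite mulf_neq0.
exact: (mulfI h4 h).
Qed.

Lemma phi_inj z : injective (fun t => if t == z then 0 else rr (t - z)).
Proof.
move=> t1 t2 /=.
have [->|h1] := eqVneq t1 z; have [->|h2] := eqVneq t2 z => //.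
- by move=> /esym /eqP; rewrite (negPf (rr_neq0 _)) // subr_eq0.
- by move=> /eqP; rewrite (negPf (rr_neq0 _)) // subr_eq0.
by move=> /rr_inj /addIr.
Qed.

Definition Qf (tau : T4) : F :=
  (dot2 tau.1.1.1 tau.1.1.1 - dot2 tau.1.1.2 tau.1.1.2) + (dot2 tau.1.2 tau.1.2 - dot2 tau.2 tau.2).

Definition W1 (tau : T4) : bool :=
  add2 (scale2 1 (sub2 tau.1.1.1 tau.1.1.2)) (scale2 1 (sub2 tau.1.2 tau.2)) == (0, 0).

Lemma sumS h :
  \sum_(r : F) QS h h r r 1 1 =
  \sum_(tau : T4) h tau.1.1.1 * (h tau.1.1.2)^* * h tau.1.2 * (h tau.2)^* * e 0 *
     ((if W1 tau then q ^+ 2 else 0) * (if Qf tau == 0 then q else 0)).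
Proof.
rewrite /QS exchange_big /=; apply: eq_bigr => tau _.
rewrite e0 mulr1 -/(W1 tau) -orth1'.
rewrite mulrCA mulr_sumr mulr_sumr; apply: eq_bigr => r _.
by rewrite -mulrDr /Qf mulrC.
Qed.

Lemma R_count A :
  (\sum_(tau : T4) [&& inAB A A tau, W1 tau & Qf tau == 0%R] <= Rcount A)%N.
Proof.
rewrite (sum_bool (fun tau => [&& inAB A A tau, W1 tau & Qf tau == 0%R])).
apply: subset_leq_card; apply/subsetP => tau; rewrite !inE => /and3P [hin hW hQ].
move: hin; rewrite /inAB => /and4P [i1 i2 i3 i4].
by rewrite i1 i2 i3 i4 /=; apply: rect_of.
Qed.

Lemma sumS_bound h (A : {set F * F}) :
  (forall u, `|h u| <= 2) -> (forall u, u \notin A -> h u = 0) ->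
  `|\sum_(r : F) QS h h r r 1 1| <= 16 * q ^+ 3 * (Rcount A)%:R.
Proof.
move=> b1 z1; rewrite sumS.
apply: le_trans (ler_norm_sum _ _ _) _.
apply: (@le_trans _ _ (16 * q ^+ 3 *
   (\sum_(tau : T4) [&& inAB A A tau, W1 tau & Qf tau == 0%R] : nat)%:R)); last first.
  apply: ler_wpM2l; first by rewrite mulr_ge0 ?exprn_ge0 ?ler0n.
  by rewrite ler_nat R_count.
rewrite natr_sum mulr_sumr; apply: ler_sum => tau _.
apply: le_trans (@term_bound h h A A tau _ _ b1 z1 b1 z1) _.
case: (W1 tau); case: (Qf tau == 0); rewrite ?andbF ?andbT ?mul0r ?mulr0 ?normr0 ?mulr0 //.
rewrite normrM !normrX ger0_norm ?ler0n // -exprSr [X in _ <= X]mulrAC.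
by case: (inAB A A tau); rewrite ?mulr1 ?mulr0.
Qed.

Lemma A4 (g : F * F * F -> C) z : supported_on_plane g z -> sim1_on_support g ->
  \sum_(t : F) \sum_(xu : F * F) (`|conv3 g (Kker e) (xu, t)| ^+ 2) ^+ 2 <=
  16 * q^-1 * (Rcount (slice_support g z))%:R.
Proof.
move=> hz s1.
set h := fun u => g (u, z).
set S := fun r => QS h h r r 1 1.
have ht t : \sum_(xu : F * F) (`|conv3 g (Kker e) (xu, t)| ^+ 2) ^+ 2 =
   (q ^+ 2)^-1 * (q ^+ 2)^-1 * (if t == z then 0 else S (rr (t - z))).
  have [->|tz] := eqVneq t z.
    by rewrite mulr0 big1 // => xu _; rewrite (conv_z _ hz) normr0 !expr0n.
  under eq_bigr do rewrite (sq_conv _ hz tz) exprMn.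
  rewrite -mulr_sumr -expr2.
  congr (_ * _).
  have ccn : cc (t - z) != 0 by rewrite cc_neq0 // subr_eq0.
  rewrite /S -(QS_c h (rr (t - z)) ccn).
  by rewrite -quad; apply: eq_bigr => xu _; rewrite [LHS]expr2.
have hL : 0 <= \sum_(t : F) \sum_(xu : F * F) (`|conv3 g (Kker e) (xu, t)| ^+ 2) ^+ 2.
  by apply: sumr_ge0' => t; apply: sumr_ge0' => xu; rewrite exprn_ge0 ?exprn_ge0 ?normr_ge0.
rewrite (eq_bigr _ (fun t _ => ht t)) -mulr_sumr in hL *.
have hsum : \sum_(t : F) (if t == z then 0 else S (rr (t - z))) = \sum_(r : F) S r - S 0.
  rewrite [in RHS](reindex_inj (@phi_inj z)) /= [in RHS](bigD1 z) //= eqxx addrC addrK.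
  rewrite [LHS](bigD1 z) //= eqxx add0r; apply: eq_bigr => t /negPf ->; by [].
rewrite hsum in hL *.
have S0 : 0 <= S 0 by exact: S0_ge0.
have qn : q != 0 := q_neq0.
have q4 : 0 < (q ^+ 2)^-1 * (q ^+ 2)^-1 by rewrite mulr_gt0 ?invr_gt0 ?exprn_gt0 ?q_gt0.
have hD : 0 <= \sum_r S r - S 0 by rewrite -(pmulr_rge0 _ q4).
have hS : 0 <= \sum_r S r by rewrite -(subrK (S 0) (\sum_r S r)) addr_ge0.
apply: (@le_trans _ _ ((q ^+ 2)^-1 * (q ^+ 2)^-1 * `|\sum_r S r|)).
  apply: ler_wpM2l; first exact: ltW.
  by rewrite ger0_norm // gerBl.
apply: le_trans.
  apply: ler_wpM2l; first exact: ltW.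
  apply: (@sumS_bound h (slice_support g z)).
  - by move=> u; exact: h_bound.
  - by move=> u; exact: h_zero.
rewrite le_eqVlt; apply/orP; left; apply/eqP; field; exact: qn.
Qed.

Lemma amgm (x y : C) : 0 <= x -> 0 <= y -> 2 * (x * y) <= x ^+ 2 + y ^+ 2.
Proof.
move=> hx hy.
have hr : x - y \is Num.real by rewrite rpredB ?ger0_real.
have : 0 <= (x - y) ^+ 2 by rewrite -real_normK // exprn_ge0 ?normr_ge0.
have -> : (x - y) ^+ 2 = x ^+ 2 + y ^+ 2 - 2 * (x * y) by ring.
by rewrite subr_ge0.
Qed.

Lemma resh3 (a b c d : C) : a * b * (c * d) = a * d * (c * b).
Proof. ring. Qed.

Lemma CS (T : finType) (f g : T -> C) : (forall x, 0 <= f x) -> (forall x, 0 <= g x) ->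
  (\sum_x f x * g x) ^+ 2 <= (\sum_x f x ^+ 2) * (\sum_x g x ^+ 2).
Proof.
move=> hf hg.
have h2 : (0 : C) < 2 by rewrite ltr0n.
rewrite -(ler_pM2l h2).
have -> : (\sum_x f x * g x) ^+ 2 = \sum_i \sum_j (f i * g j) * (f j * g i).
  rewrite expr2 big_distrlr /=; apply: eq_bigr => i _; apply: eq_bigr => j _.
  by rewrite resh3.
have -> : (\sum_x f x ^+ 2) * (\sum_x g x ^+ 2) = \sum_i \sum_j (f i * g j) ^+ 2.
  rewrite big_distrlr /=; apply: eq_bigr => i _; apply: eq_bigr => j _; by rewrite exprMn.
have -> : (2 : C) * (\sum_i \sum_j (f i * g j) ^+ 2) =
   \sum_i \sum_j ((f i * g j) ^+ 2 + (f j * g i) ^+ 2).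
  rewrite mulr2n mulrDl !mul1r; rewrite [X in _ + X]exchange_big /= -big_split /=.
  by apply: eq_bigr => i _; rewrite -big_split.
rewrite mulr_sumr; apply: ler_sum => i _; rewrite mulr_sumr; apply: ler_sum => j _.
by apply: amgm; rewrite mulr_ge0.
Qed.

Section Planes.
Variables (z z' : F) (gz gz' : F * F * F -> C).
Hypotheses (zz : z != z') (hz : supported_on_plane gz z) (hz' : supported_on_plane gz' z').
Hypotheses (s1 : sim1_on_support gz) (s1' : sim1_on_support gz').

Local Notation A := (slice_support gz z).
Local Notation B := (slice_support gz' z').
Local Notation a := (fun xu t => conv3 gz (Kker e) (xu, t)).
Local Notation b := (fun xu t => conv3 gz' (Kker e) (xu, t)).

Lemma slice_T t :
  \sum_(xu : F * F) `|a xu t| ^+ 2 * `|b xu t| ^+ 2 <=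
  16 * (q ^+ 2)^-1 *
  (\sum_(tau : T4) [&& t != z, t != z', inAB A B tau & Wt z z' t tau == (0%R, 0%R)] : nat)%:R.
Proof.
have [->|tz] := eqVneq t z.
  rewrite big1 ?mulr_ge0 ?ler0n ?invr_ge0 ?exprn_ge0 ?ler0n // => xu _.
  by rewrite /= (conv_z _ hz) normr0 expr0n mul0r.
have [->|tz'] := eqVneq t z'.
  rewrite big1 ?mulr_ge0 ?ler0n ?invr_ge0 ?exprn_ge0 ?ler0n // => xu _.
  by rewrite /= (conv_z _ hz') normr0 expr0n mulr0.
rewrite /=.
set L := (X in X <= _).
have hL : 0 <= L by apply: sumr_ge0' => xu; rewrite mulr_ge0 ?exprn_ge0 ?normr_ge0.
have eL : L = (q ^+ 2)^-1 * (q ^+ 2)^-1 * QS (fun u => gz (u, z)) (fun u => gz' (u, z'))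
      (rr (t - z)) (rr (t - z')) (cc (t - z)) (cc (t - z')).
  rewrite /L; under eq_bigr do rewrite (sq_conv _ hz tz) (sq_conv _ hz' tz') mulrACA.
  by rewrite -mulr_sumr quad.
rewrite -(ger0_norm hL) eL normrM ger0_norm; last by rewrite mulr_ge0 ?invr_ge0 ?exprn_ge0 ?ler0n.
apply: le_trans.
  apply: ler_wpM2l; first by rewrite mulr_ge0 ?invr_ge0 ?exprn_ge0 ?ler0n.
  apply: (QS_bound (A := A) (B := B)).
  - by move=> u; exact: h_bound.
  - by move=> u; exact: h_zero.
  - by move=> u; exact: h_bound.
  - by move=> u; exact: h_zero.
rewrite (eq_bigr (fun tau : T4 => ([&& inAB A B tau &
           add2 (scale2 (cc (t - z)) (sub2 tau.1.1.1 tau.1.1.2)) (scale2 (cc (t - z')) (sub2 tau.1.2 tau.2)) == (0%R, 0%R)] : nat))); last first.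
  by [].
set M := (X in _ <= _ * X).
have qn : q ^+ 2 != 0 by rewrite expf_neq0 // q_neq0.
have -> : (q ^+ 2)^-1 * (q ^+ 2)^-1 * (16 * q ^+ 2 * M) = 16 * (q ^+ 2)^-1 * M.
  by field; exact: q_neq0.
by rewrite lexx.
Qed.

Lemma L2_eq :
  L2sq (fun x => conv3 gz (Kker e) x * conv3 gz' (Kker e) x) =
  \sum_(t : F) \sum_(xu : F * F) `|a xu t| ^+ 2 * `|b xu t| ^+ 2.
Proof.
rewrite /L2sq sum_pair exchange_big /=; apply: eq_bigr => t _; apply: eq_bigr => xu _.
by rewrite normrM exprMn.
Qed.

Lemma T_bound :
  L2sq (fun x => conv3 gz (Kker e) x * conv3 gz' (Kker e) x) <=
  16 * (q^-1 * #|A|%:R * #|B|%:R + (q ^+ 2)^-1 * (Tcount A B)%:R).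
Proof.
rewrite L2_eq; apply: le_trans (ler_sum _ (fun t _ => slice_T t)) _.
rewrite -mulr_sumr -natr_sum.
apply: (@le_trans _ _ (16 * (q ^+ 2)^-1 * (#|F| * (#|A| * #|B|) + Tcount A B)%:R)).
  apply: ler_wpM2l; first by rewrite mulr_ge0 ?invr_ge0 ?exprn_ge0 ?ler0n.
  rewrite ler_nat; exact: (count_T A B zz).
rewrite natrD !natrM.
have qn := q_neq0.
rewrite le_eqVlt; apply/orP; left; apply/eqP; field; exact: qn.
Qed.

Lemma R_bound :
  L2sq (fun x => conv3 gz (Kker e) x * conv3 gz' (Kker e) x) <=
  16 * q^-1 * sqrtC ((Rcount A * Rcount B)%:R).
Proof.
rewrite L2_eq.
set fa := fun p : F * (F * F) => `|a p.2 p.1| ^+ 2.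
set fb := fun p : F * (F * F) => `|b p.2 p.1| ^+ 2.
have eX : \sum_(t : F) \sum_(xu : F * F) `|a xu t| ^+ 2 * `|b xu t| ^+ 2 =
          \sum_p fa p * fb p by rewrite sum_pair.
have eA : \sum_p fa p ^+ 2 = \sum_(t : F) \sum_(xu : F * F) (`|a xu t| ^+ 2) ^+ 2
  by rewrite sum_pair.
have eB : \sum_p fb p ^+ 2 = \sum_(t : F) \sum_(xu : F * F) (`|b xu t| ^+ 2) ^+ 2
  by rewrite sum_pair.
have hCS := @CS _ fa fb (fun p => exprn_ge0 _ (normr_ge0 _)) (fun p => exprn_ge0 _ (normr_ge0 _)).
rewrite -eX in hCS; rewrite eA eB in hCS.
have hA := A4 hz s1; have hB := A4 hz' s1'.
set X := \sum_(t : F) _.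
have hX : 0 <= X.
  by apply: sumr_ge0' => t; apply: sumr_ge0' => xu; rewrite mulr_ge0 ?exprn_ge0 ?normr_ge0.
set Y := 16 * q^-1 * sqrtC _.
have hY : 0 <= Y by rewrite mulr_ge0 ?sqrtC_ge0 ?ler0n ?mulr_ge0 ?invr_ge0 ?ler0n.
rewrite -(ler_pXn2r (n := 2)) ?nnegrE //.
apply: le_trans hCS _.
have -> : Y ^+ 2 = (16 * q^-1 * (Rcount A)%:R) * (16 * q^-1 * (Rcount B)%:R).
  rewrite /Y exprMn sqrtCK natrM; ring.
by apply: ler_pM => //; apply: sumr_ge0' => t; apply: sumr_ge0' => xu; rewrite !exprn_ge0 ?normr_ge0.
Qed.

Lemma final_bound :
  L2sq (fun x => conv3 gz (Kker e) x * conv3 gz' (Kker e) x) <=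
  16%:R * (q^-1 * #|A|%:R * #|B|%:R + (q ^+ 2)^-1 * Bq C A B).
Proof.
have hT := T_bound; have hR := R_bound.
rewrite /Bq /Num.min /Order.min.
case: ifP => _ //.
apply: le_trans hR _.
have qn := q_neq0.
have -> : (16 : C) * q^-1 * sqrtC (Rcount A * Rcount B)%:R =
    16 * ((q ^+ 2)^-1 * (q * sqrtC (Rcount A * Rcount B)%:R)).
  by field; exact: qn.
rewrite -[16%:R]/(16 : C) ler_pM2l ?ltr0n //.
by rewrite lerDr !mulr_ge0 ?invr_ge0 ?ler0n.
Qed.

End Planes.

End Main.

Theorem lemma3p2 :
  exists c : nat,
  forall (F : finFieldType) (C : numClosedFieldType) (e : F -> C),
  2%N \notin [pchar F] ->
  ~ (exists y : F, y * y = -1) ->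
  nontrivial_additive_character e ->
  forall (z z' : F) (gz gz' : F * F * F -> C),
  z != z' ->
  supported_on_plane gz z -> supported_on_plane gz' z' ->
  sim1_on_support gz -> sim1_on_support gz' ->
  let Gz := slice_support gz z in
  let Gz' := slice_support gz' z' in
  L2sq (fun x => conv3 gz (Kker e) x * conv3 gz' (Kker e) x)
  <= c%:R * ((#|F|%:R)^-1 * #|Gz|%:R * #|Gz'|%:R
             + (#|F|%:R ^+ 2)^-1 * Bq C Gz Gz').
Proof.
exists 16%N => F C e hch _ [eD [e_nz e_nt]] z z' gz gz' zz hz hz' s1 s1'.
rewrite /=.
have two_nz : (2 : F) != 0.
  by move: hch; rewrite inE /=.
exact: (final_bound eD e_nz e_nt two_nz zz hz hz' s1 s1').
Qed.
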